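(* If $G$ is any blowup of $F_3$, then $\chi(G)\le\lceil\frac54\omega(G)\rceil$.
   Context: $F_3$ is the graph on $\{v_1,\dots,v_6,x,y,z\}$ where $v_1\cdots v_6v_1$ is an induced 6-cycle, $x$ is adjacent to $v_1,v_2,v_3$, $y$ to $v_3,v_4,v_5$, $z$ to $v_5,v_6,v_1$, $\{x,y,z\}$ is a triangle, and there are no other edges. A blowup of $H$ is any graph whose vertex set can be partitioned into $|V(H)|$ (not necessarily non-empty) cliques $Q_v$, $v\in V(H)$, with $Q_u$ complete to $Q_v$ if $uv\in E(H)$ and no edges between $Q_u$ and $Q_v$ if $uv\notin E(H)$. *)

(* Defs.v *)
From mathcomp Require Import all_boot.
Set Implicit Arguments. Unset Strict Implicit. Unset Printing Implicit Defensive.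

(* Vertices of F_3 as 'I_9 : v1..v6 = 0..5, x = 6, y = 7, z = 8. *)
Definition F3_edges : seq (nat * nat) :=
  [:: (0,1); (1,2); (2,3); (3,4); (4,5); (5,0);
      (6,0); (6,1); (6,2);
      (7,2); (7,3); (7,4);
      (8,4); (8,5); (8,0);
      (6,7); (7,8); (6,8)].

Definition F3_adj (u v : 'I_9) : bool :=
  ((val u, val v) \in F3_edges) || ((val v, val u) \in F3_edges).

(* Parts may be empty. *)
Definition blowup_of_F3 (T : finType) (e : rel T) : Prop :=
  exists f : T -> 'I_9, forall x y : T,
    e x y = (x != y) && ((f x == f y) || F3_adj (f x) (f y)).

Definition is_clique (T : finType) (e : rel T) (A : {set T}) : bool :=
  [forall x in A, forall y in A, (x != y) ==> e x y].

Definition omega (T : finType) (e : rel T) : nat :=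
  \max_(A : {set T} | is_clique e A) #|A|.

Definition colorable (T : finType) (e : rel T) (k : nat) : bool :=
  [exists c : {ffun T -> 'I_k}, [forall x, forall y, e x y ==> (c x != c y)]].

(* chromatic number: least k <= #|T| with a proper k-colouring
   (for loopless graphs #|T| colours always suffice) *)
Definition chi (T : finType) (e : rel T) : nat :=
  \big[minn/#|T|]_(k < #|T|.+1 | colorable e k) k.

(* Main.v *)
Require Import Defs.
From mathcomp Require Import all_boot zify.
Set Implicit Arguments. Unset Strict Implicit.
Definition gcol (a : nat -> nat) (K v j : nat) : nat :=
  let X := a 6 in let Y := a 7 in let Z := a 8 in
  let W := X + Y + Z in let R := K - W in
  let t1 := a 0 - R in let t3 := a 2 - R in let t5 := a 4 - R in
  match v with
  | 0 => if j < t1 then X + j else W + (j - t1)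
  | 1 => if j < (Y - t1) + (Z - t3) then X + t1 + j else K.-1 - (j - ((Y - t1) + (Z - t3)))
  | 2 => if j < t3 then W - t3 + j else W + (j - t3)
  | 3 => if j < Z - t3 then X + Y + j else if j < (Z - t3) + (X - t5) then t5 + (j - (Z - t3))
         else K.-1 - (j - ((Z - t3) + (X - t5)))
  | 4 => if j < t5 then j else W + (j - t5)
  | 5 => if j < X - t5 then t5 + j else if j < (X - t5) + (Y - t1) then X + t1 + (j - (X - t5))
         else K.-1 - (j - ((X - t5) + (Y - t1)))
  | 6 => j
  | 7 => X + j
  | _ => X + Y + j
  end.

Definition tri_ok (a : nat -> nat) (w : nat) :=
  (a 0 + a 1 + a 6 <= w) /\ (a 1 + a 2 + a 6 <= w) /\ (a 2 + a 3 + a 7 <= w) /\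
      (a 3 + a 4 + a 7 <= w) /\ (a 4 + a 5 + a 8 <= w) /\
   (a 5 + a 0 + a 8 <= w) /\ (a 6 + a 7 + a 8 <= w) /\ (a 6 + a 7 + a 2 <= w) /\
      (a 7 + a 8 + a 4 <= w) /\ (a 8 + a 6 + a 0 <= w).


Ltac solve_g := rewrite /gcol /=; repeat case: ifP => ?; lia.

Lemma g_range a w : tri_ok a w -> forall v j, v < 9 -> j < a v ->
  gcol a ((5 * w + 3) %/ 4) v j < (5 * w + 3) %/ 4.
Proof.
case=> ? [?] [?] [?] [?] [?] [?] [?] [?] ? v j.
case: v => [|[|[|[|[|[|[|[|[|v]]]]]]]]] //= ?; solve_g.
Qed.

Lemma g_inj a w : tri_ok a w -> forall v i j, v < 9 -> i < a v -> j < a v ->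
  gcol a ((5 * w + 3) %/ 4) v i = gcol a ((5 * w + 3) %/ 4) v j -> i = j.
Proof.
case=> ? [?] [?] [?] [?] [?] [?] [?] [?] ? v i j.
case: v => [|[|[|[|[|[|[|[|[|v]]]]]]]]] //= ? ?; solve_g.
Qed.

Lemma g_edge a w : tri_ok a w -> forall p, p \in F3_edges -> forall i j,
  i < a p.1 -> j < a p.2 ->
  gcol a ((5 * w + 3) %/ 4) p.1 i <> gcol a ((5 * w + 3) %/ 4) p.2 j.
Proof.
case=> ? [?] [?] [?] [?] [?] [?] [?] [?] ? p Hp i j.
rewrite /F3_edges in Hp.
repeat (case/predU1P: Hp => [-> /= ? ?|Hp]; first by solve_g).
by [].
Qed.
Lemma bigmin_le (I : eqType) (s : seq I) (P : pred I) (F : I -> nat) x i0 :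
  i0 \in s -> P i0 -> \big[minn/x]_(i <- s | P i) F i <= F i0.
Proof.
elim: s => //= a s IH; rewrite inE big_cons => /predU1P [<-|H] Pi.
  by rewrite Pi geq_minl.
case: (P a); last exact: IH.
exact: leq_trans (geq_minr _ _) (IH H Pi).
Qed.

Lemma bigmin_idx (I : eqType) (s : seq I) (P : pred I) (F : I -> nat) x :
  \big[minn/x]_(i <- s | P i) F i <= x.
Proof.
elim: s => [|a s IH]; first by rewrite big_nil.
rewrite big_cons; case: (P a) => //; exact: leq_trans (geq_minr _ _) IH.
Qed.

Lemma tri_adj (p q r m n : nat) :
  (p, q, r) \in [:: (0,1,6); (1,2,6); (2,3,7); (3,4,7); (4,5,8); (5,0,8);
                    (6,7,8); (6,7,2); (7,8,4); (8,6,0)] ->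
  m \in [:: p; q; r] -> n \in [:: p; q; r] ->
  (m == n) || ((m, n) \in F3_edges) || ((n, m) \in F3_edges).
Proof.
move=> H.
repeat (case/predU1P: H => [[-> -> ->] Hm Hn|H];
  [ repeat (case/predU1P: Hm => [->|Hm]) => //;
    repeat (case/predU1P: Hn => [->|Hn]) => // | ]).
by [].
Qed.

Lemma tri_uniq (p q r : nat) :
  (p, q, r) \in [:: (0,1,6); (1,2,6); (2,3,7); (3,4,7); (4,5,8); (5,0,8);
                    (6,7,8); (6,7,2); (7,8,4); (8,6,0)] -> uniq [:: p; q; r].
Proof.
move=> H; repeat (case/predU1P: H => [[-> -> ->] //|H]); by [].
Qed.

Lemma card_cons (T : finType) (g : T -> nat) (p : nat) (s : seq nat) :
  p \notin s ->
  #|[set x | g x \in p :: s]| = #|[set x | g x == p]| + #|[set x | g x \in s]|.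
Proof.
move=> ps.
have -> : [set x | g x \in p :: s] = [set x | g x == p] :|: [set x | g x \in s].
  by apply/setP => x; rewrite !inE.
have H0 : [set x | g x == p] :&: [set x | g x \in s] = set0.
  apply/setP => x; rewrite !inE; case: eqP => // ->; exact: negbTE.
by rewrite -cardsUI H0 cards0 addn0.
Qed.

Theorem theorem5p7 (T : finType) (e : rel T) :
  blowup_of_F3 e -> chi e <= (5 * omega e + 3) %/ 4.
Proof.
move=> [f hf].
pose a n := #|[set x | val (f x) == n]|.
have tri_le : forall p q r,
  (p, q, r) \in [:: (0,1,6); (1,2,6); (2,3,7); (3,4,7); (4,5,8); (5,0,8);
                    (6,7,8); (6,7,2); (7,8,4); (8,6,0)] ->
  a p + a q + a r <= omega e.
  move=> p q r Hpqr.
  have := tri_uniq Hpqr => /andP [H1 /andP [H2 _]].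
  set S := [set x | val (f x) \in [:: p; q; r]].
  have cS : #|S| = a p + a q + a r.
    have E1 := @card_cons T (fun x => val (f x)) p [:: q; r].
    have E2 := @card_cons T (fun x => val (f x)) q [:: r].
    simpl in E1, E2.
    rewrite /S (E1 H1) (E2 H2) -addnA.
    congr (_ + (_ + _)); apply: eq_card => x; rewrite !inE //.
  have clS : is_clique e S.
    apply/forallP => x; apply/implyP => Hx; apply/forallP => y; apply/implyP => Hy.
    apply/implyP => nxy; rewrite hf nxy /= /F3_adj -val_eqE.
    rewrite inE in Hx; rewrite inE in Hy.
    by rewrite orbA; apply: tri_adj Hpqr Hx Hy.
  by rewrite -cS /omega; apply: leq_bigmax_cond.
have Htri : tri_ok a (omega e).
  by do 9 (split; first by apply: tri_le); apply: tri_le.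
set K := (5 * omega e + 3) %/ 4.
have Hidx x : index x (enum [set y | val (f y) == val (f x)]) < a (val (f x)).
  by rewrite /a cardE index_mem mem_enum inE.
have Hlt x : gcol a K (val (f x)) (index x (enum [set y | val (f y) == val (f x)])) < K.
  exact: (g_range Htri (ltn_ord _) (Hidx x)).
have Hcol : colorable e K.
  apply/existsP; exists [ffun x => Ordinal (Hlt x)].
  apply/forallP => x; apply/forallP => y; apply/implyP => exy.
  rewrite !ffunE -val_eqE /=; apply/eqP => Heq.
  move: exy; rewrite hf => /andP [nxy /orP [/eqP fxy | adj]].
  - have Hy := Hidx y; have Hx := Hidx x.
    rewrite fxy in Heq Hx.
    have := g_inj Htri (ltn_ord _) Hx Hy Heq => Hi.
    have Hxin : x \in enum [set z | val (f z) == val (f y)] by rewrite mem_enum inE fxy.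
    have Hyin : y \in enum [set z | val (f z) == val (f y)] by rewrite mem_enum inE.
    move/negP: nxy; apply; apply/eqP.
    by rewrite -(nth_index x Hxin) Hi (nth_index x Hyin).
  - case/orP: adj => H.
    + exact: (g_edge Htri H (Hidx x) (Hidx y) Heq).
    + exact: (g_edge Htri H (Hidx y) (Hidx x) (esym Heq)).
rewrite /chi; case: (leqP K #|T|) => HK.
  have HK' : K < #|T|.+1 by [].
  exact: (@bigmin_le _ _ _ (fun k : 'I_#|T|.+1 => nat_of_ord k) _ (Ordinal HK') (mem_index_enum _) Hcol).
exact: leq_trans (bigmin_idx _ _ _ _) (ltnW HK).
Qed.
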